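(* Consider the network model and the LC-NSB algorithm described in the context, with no packet arrivals after time 0. Consider any frame $k'$, consisting of time-slots $p=3k'$, $p+1$, $p+2$. If $\Delta(p)\ge 2$, then under LC-NSB the maximum node queue length at the end of the frame (i.e., after the transmissions of slot $p+2$) is at most $\Delta(p)-2$.
   Context: Network model. $G=(V,E)$ is a finite undirected graph with $n=|V|$ nodes; $L(i)$ denotes the set of links incident to node $i$. Time is slotted, $k=0,1,2,\dots$. $Q_l(k)$ is the number of packets at link $l$ in slot $k$, $Q_i(k)=\sum_{l\in L(i)}Q_l(k)$ is the node queue length, and $\Delta(k)=\max_iQ_i(k)$. A schedule is a matching of $G$ (links pairwise sharing no endpoint); only links with $Q_l(k)>0$ may be scheduled; each scheduled link transmits one packet, which leaves the system. LC-NSB algorithm. Frame $k'$ consists of slots $3k',3k'+1,3k'+2$. $R_i(k)=1$ if node $i$ is an endpoint of a link scheduled in slot $k$, else $0$ ($R_i(k)=0$ for $k<0$). $U_i(k)=R_i(k-1)R_i(k-2)$ if $k=3k'+2$ for some integer $k'$, $U_i(k)=R_i(k-1)$ otherwise. Node $i$ is critical in slot $k$ if $Q_i(k)=\Delta(k)$ and heavy if $Q_i(k)\ge\frac{n-1}{n}\Delta(k)$. In slot $k$, LC-NSB sets $w_i(k)=5-2U_i(k)$ if $i$ is critical, $w_i(k)=4-2U_i(k)$ if $i$ is heavy but not critical, and $w_i(k)=1$ otherwise; it excludes links with $Q_l(k)=0$ and schedules a matching $M$ of the remaining links maximizing $\sum_{i:\,M\cap L(i)\ne\emptyset}w_i(k)$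 (ties broken arbitrarily). *)

(* Defs.v *)
From mathcomp Require Import all_boot.
Set Implicit Arguments. Unset Strict Implicit. Unset Printing Implicit Defensive.

Section Model.
Variables (V : finType) (e : rel V).

Definition is_link (l : {set V}) : bool :=
  [exists x, exists y, e x y && (l == [set x; y])].

(* Q : link queue lengths (values on non-links are ignored). *)
Definition node_queue (Q : {set V} -> nat) (i : V) : nat :=
  \sum_(l : {set V} | is_link l && (i \in l)) Q l.

Definition maxq (Q : {set V} -> nat) : nat := \max_(i : V) node_queue Q i.

Definition is_schedule (Q : {set V} -> nat) (M : {set {set V}}) : Prop :=
  (forall l, l \in M -> is_link l /\ 0 < Q l) /\
  (forall l1 l2, l1 \in M -> l2 \in M -> l1 != l2 -> [disjoint l1 & l2]).

Definition served (M : {set {set V}}) (i : V) : bool := [exists l in M, i \in l].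

(* R_i(k) for k >= 0 (slots are nat); R_i(k) = 0 for k < 0 is handled in Uv. *)
Definition Rv (Ms : nat -> {set {set V}}) (k : nat) (i : V) : bool := served (Ms k) i.

Definition Uv (Ms : nat -> {set {set V}}) (k : nat) (i : V) : bool :=
  if k %% 3 == 2 then Rv Ms k.-1 i && Rv Ms k.-2 i   (* here k >= 2 *)
  else (0 < k) && Rv Ms k.-1 i.

(* critical: Q_i = Delta;  heavy: Q_i >= (n-1)/n Delta, i.e. n Q_i >= (n-1) Delta *)
Definition critical (Q : {set V} -> nat) (i : V) : bool := node_queue Q i == maxq Q.
Definition heavy (Q : {set V} -> nat) (i : V) : bool :=
  (#|V| - 1) * maxq Q <= #|V| * node_queue Q i.

Definition weight (Q : {set V} -> nat) (u : bool) (i : V) : nat :=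
  if critical Q i then 5 - 2 * u
  else if heavy Q i then 4 - 2 * u
  else 1.

Definition sched_weight (w : V -> nat) (M : {set {set V}}) : nat :=
  \sum_(i : V | served M i) w i.

Definition lcnsb_choice (Q : nat -> {set V} -> nat) (Ms : nat -> {set {set V}})
    (k : nat) : Prop :=
  let w := fun i => weight (Q k) (Uv Ms k i) i in
  is_schedule (Q k) (Ms k) /\
  forall M, is_schedule (Q k) M -> sched_weight w M <= sched_weight w (Ms k).

Definition no_arrival_dynamics (Q : nat -> {set V} -> nat) (Ms : nat -> {set {set V}})
  : Prop := forall k l, Q k.+1 l = Q k l - (l \in Ms k).

End Model.

(* Main.v *)
Require Import Defs.
From mathcomp Require Import all_boot zify.
Set Implicit Arguments. Unset Strict Implicit. Unset Printing Implicit Defensive.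

Lemma disjP (T : finType) (A B : {set T}) :
  (forall x, x \in A -> x \notin B) -> [disjoint A & B].
Proof.
move=> H; rewrite -setI_eq0; apply/eqP/setP=> x; rewrite !inE.
by case: (boolP (x \in A)) => // /H /negbTE ->.
Qed.


Definition nbh (T : finType) (R : rel T) (S : {set T}) := [set y | [exists x in S, R x y]].

Lemma nbhP (T : finType) (R : rel T) (S : {set T}) y : reflect (exists2 x, x \in S & R x y) (y \in nbh R S).
Proof. by rewrite inE; apply: (iffP existsP) => [[x /andP [? ?]]|[x ? ?]]; exists x => //; apply/andP. Qed.

Lemma hall (T : finType) n : forall (R : rel T) (W : {set T}), #|W| <= n ->
  (forall S : {set T}, S \subset W -> #|S| <= #|nbh R S|) ->
  exists f : T -> T, (forall x, x \in W -> R x (f x)) /\ {in W &, injective f}.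
Proof.
elim: n => [|n IH] R W hW hall.
  move: hW; rewrite leqn0 cards_eq0 => /eqP ->.
  by exists id; split => [x|x y]; rewrite inE.
case: (boolP [exists S : {set T}, [&& S \subset W, 0 < #|S|, #|S| < #|W| & #|nbh R S| <= #|S|]]).
  case/existsP => S /and4P [sSW S0 SW tight].
  have hS : #|S| <= n by rewrite -ltnS; apply: leq_trans SW hW.
  have [f1 [f1R f1i]] := IH R S hS (fun S' sS' => hall S' (subset_trans sS' sSW)).
  pose R' := [rel x y | R x y && (y \notin nbh R S)].
  have hW' : #|W :\: S| <= n.
    have := cardsID S W; rewrite (setIidPr sSW) => E.
    rewrite -ltnS; apply: leq_trans hW; rewrite -E.
    by rewrite -{1}(add0n #|W :\: S|) ltn_add2r.
  have hall' : forall S' : {set T}, S' \subset W :\: S -> #|S'| <= #|nbh R' S'|.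
    move=> S' sS'.
    have dis : S' :&: S = set0.
      apply/setP => x; rewrite !inE; apply/negbTE; apply/andP => -[xS' xS].
      by move: (subsetP sS' x xS'); rewrite inE xS.
    have sU : S' :|: S \subset W.
      by rewrite subUset sSW andbT; apply: subset_trans sS' (subsetDl _ _).
    have h1 := hall (S' :|: S) sU.
    rewrite cardsU dis cards0 subn0 in h1.
    have sub : nbh R (S' :|: S) \subset nbh R' S' :|: nbh R S.
      apply/subsetP => y; rewrite !inE => /existsP [x /andP [xU Rxy]].
      move: xU; rewrite !inE => /orP [xS'|xS].
        case: (boolP [exists x in S, R x y]) => yN; rewrite ?orbT //.
        by apply/orP; left; apply/existsP; exists x; rewrite xS' /= Rxy /= inE.
      by apply/orP; right; apply/existsP; exists x; rewrite xS Rxy.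
    have h2 := leq_trans (subset_leq_card sub) (leq_of_leqif (leq_card_setU _ _)).
    have h3 := leq_trans h1 h2.
    rewrite -(leq_add2r #|S|); apply: leq_trans h3 _.
    by rewrite leq_add2l.
  have [f2 [f2R f2i]] := IH R' (W :\: S) hW' hall'.
  exists (fun x => if x \in S then f1 x else f2 x); split.
    move=> x xW; case: ifP => xS; first exact: f1R.
    have xW' : x \in W :\: S by rewrite inE xS xW.
    by have /andP [] := f2R x xW'.
  move=> x y xW yW /=.
  have nf1 : forall z, z \in S -> f1 z \in nbh R S by move=> z zS; apply/nbhP; exists z => //; apply: f1R.
  have nf2 : forall z, z \in W -> z \notin S -> f2 z \notin nbh R S.
    move=> z zW zS; have zW' : z \in W :\: S by rewrite inE zS zW.
    by have /andP [] := f2R z zW'.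
  case: ifP => xS; case: ifP => yS.
  - exact: f1i.
  - by move=> E; move: (nf2 y yW (negbT yS)); rewrite -E nf1.
  - by move=> E; move: (nf2 x xW (negbT xS)); rewrite E nf1.
  - by apply: f2i; rewrite inE ?xS ?yS.
move/existsPn => nt.
case: (set_0Vmem W) => [-> | [x0 x0W]].
  by exists id; split => [x|x y]; rewrite inE.
have : 0 < #|nbh R [set x0]|.
  by apply: leq_trans (hall _ _); rewrite ?cards1 ?sub1set.
case/card_gt0P => y0 /nbhP [x1 /set1P E1 Rx0y0]; rewrite E1 in Rx0y0; clear E1 x1.
pose R' := [rel x y | R x y && (y != y0)].
have hW' : #|W :\ x0| <= n by move: hW; rewrite (cardsD1 x0) x0W.
have hall' : forall S' : {set T}, S' \subset W :\ x0 -> #|S'| <= #|nbh R' S'|.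
  move=> S' sS'; case: (set_0Vmem S') => [-> | [x1 x1S]]; first by rewrite cards0.
  have sSW : S' \subset W := subset_trans sS' (subD1set _ _).
  have lt : #|S'| < #|W|.
    apply: leq_trans (_ : #|W :\ x0|.+1 <= _); first by rewrite ltnS subset_leq_card.
    by rewrite (cardsD1 x0 W) x0W.
  have S0 : 0 < #|S'| by apply/card_gt0P; exists x1.
  have := nt S'; rewrite sSW S0 lt /= -ltnNge => big.
  have sub : nbh R S' :\ y0 \subset nbh R' S'.
    apply/subsetP => y; rewrite !inE => /andP [ny0 /existsP [x2 /andP [xS Rxy]]].
    by apply/existsP; exists x2; rewrite xS /= Rxy ny0.
  apply: leq_trans (subset_leq_card sub).
  move: big; rewrite (cardsD1 y0 (nbh R S')).
  by case: (y0 \in nbh R S') => /=; rewrite ?add1n ?ltnS // add0n => /ltnW.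
have [f2 [f2R f2i]] := IH R' (W :\ x0) hW' hall'.
exists (fun x => if x == x0 then y0 else f2 x); split.
  move=> x xW; case: eqP => [-> //| /eqP xx0].
  have xW' : x \in W :\ x0 by rewrite !inE xx0 xW.
  by have /andP [] := f2R x xW'.
have ny : forall z, z \in W -> z != x0 -> f2 z != y0.
  move=> z zW zx; have zW' : z \in W :\ x0 by rewrite !inE zx zW.
  by have /andP [] := f2R z zW'.
move=> x y xW yW /=; case: eqP => [->|/eqP xx0]; case: eqP => [->|/eqP yx0] //.
- by move=> E; move: (ny y yW yx0); rewrite E eqxx.
- by move=> E; move: (ny x xW xx0); rewrite E eqxx.
- by apply: f2i; rewrite !inE ?xx0 ?yx0.
Qed.
Lemma U1 (V : finType) (Ms : nat -> {set {set V}}) k' i : Uv Ms (3 * k' + 1) i = Rv Ms (3 * k') i.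
Proof.
rewrite /Uv; have -> : (3 * k' + 1) %% 3 == 2 = false by apply/eqP; lia.
by rewrite addn1.
Qed.
Lemma U2 (V : finType) (Ms : nat -> {set {set V}}) k' i :
  Uv Ms (3 * k' + 2) i = Rv Ms (3 * k' + 1) i && Rv Ms (3 * k') i.
Proof.
rewrite /Uv; have -> : (3 * k' + 2) %% 3 == 2 by apply/eqP; lia.
by rewrite addn2 /= addn1.
Qed.

Lemma ar1 a D : a <= D -> a != D -> a <= D - 1.
Proof. move=> h /eqP; lia. Qed.
Lemma ar2 a D : a <= D - 1 -> D - 2 < a -> a = D - 1.
Proof. lia. Qed.
Lemma ar3 a D (b : bool) : a <= D -> a - 1 - b <= D - 1.
Proof. case: b => /=; lia. Qed.
Lemma ar4 a D : a <= D -> a - 0 - 1 <= D - 1.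
Proof. lia. Qed.
Lemma ar5 a D : a <= D -> D - 2 < a - 1 - 1 -> False.
Proof. lia. Qed.
Lemma ar6 a D : 2 <= D -> a = D - 1 -> a - 1 <= D - 2.
Proof. lia. Qed.
Lemma ar7 a D : 2 <= D -> a = D - 1 -> 0 < a.
Proof. lia. Qed.

Section Gen.
Variables (V : finType) (e : rel V).
Hypotheses (e_sym : symmetric e) (e_irr : irreflexive e).

Lemma link2 l z : is_link e l -> z \in l -> exists2 y, e z y & l = [set z; y].
Proof.
case/existsP=> a /existsP [b /andP [eab /eqP ->]]; case/set2P => ->.
  by exists b.
by exists a; [rewrite e_sym | rewrite setUC].
Qed.

Lemma link_set2 x y : e x y -> is_link e [set x; y].
Proof. by move=> exy; apply/existsP; exists x; apply/existsP; exists y; rewrite exy eqxx. Qed.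

Lemma e_neq x y : e x y -> x != y.
Proof. by apply: contraTneq => ->; rewrite e_irr. Qed.

Lemma sched_uniq Q M l1 l2 i : is_schedule e Q M -> l1 \in M -> l2 \in M ->
  i \in l1 -> i \in l2 -> l1 = l2.
Proof.
case=> _ dis H1 H2 i1 i2; apply/eqP; apply: contraT => ne.
by move: (disjointFr (dis _ _ H1 H2 ne) i1); rewrite i2.
Qed.

Lemma sw_mono (w : V -> nat) M M' : (forall i, served M i -> served M' i) ->
  sched_weight w M <= sched_weight w M'.
Proof.
move=> H; rewrite /sched_weight.
exact: (sub_le_big (fun _ => leqnn _) (fun x y => leq_addr y x)).
Qed.

Lemma sw_add (w : V -> nat) M M' z : ~~ served M z ->
  (forall i, (i == z) || served M i -> served M' i) ->
  sched_weight w M + w z <= sched_weight w M'.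
Proof.
move=> nz H; rewrite /sched_weight [X in _ <= X](bigD1 z) ?H ?eqxx //= addnC leq_add2l.
apply: (sub_le_big (fun _ => leqnn _) (fun x y => leq_addr y x)) => i si.
rewrite H ?si ?orbT //=; apply: contraNneq nz => <-; exact: si.
Qed.

Lemma sw_swap (w : V -> nat) M M' z x : ~~ served M z -> served M x ->
  (forall i, (i == z) || served M i -> i != x -> served M' i) ->
  sched_weight w M + w z <= sched_weight w M' + w x.
Proof.
move=> nz sx H; have zx : z != x by apply: contraNneq nz => ->.
rewrite /sched_weight (bigD1 x) //= [X in _ <= X + _](bigD1 z) ?H ?eqxx //=.
set S1 := \sum_(i | _ && _) _; set S2 := \sum_(i | _ && _) _.
suff : S1 <= S2 by lia.
apply: (sub_le_big (fun _ => leqnn _) (fun x y => leq_addr y x)) => i /andP [si ix].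
rewrite H ?si ?orbT //=; apply: contraNneq nz => <-; exact: si.
Qed.


Lemma add_link Q M x y : is_schedule e Q M -> e x y -> 0 < Q [set x; y] ->
  ~~ served M x -> ~~ served M y ->
  is_schedule e Q ([set x; y] |: M) /\
  (forall i, (i == x) || (i == y) || served M i -> served ([set x; y] |: M) i).
Proof.
case=> [Hl Hd] exy q nx ny; split; [split|].
- move=> l; rewrite in_setU1 => /predU1P [-> | /Hl ] //.
  by split; [apply: link_set2|].
- have H0 : forall l2, l2 \in M -> [disjoint [set x; y] & l2].
    move=> l2 l2M; apply: disjP => i /set2P [] ->;
      [apply: contra nx | apply: contra ny] => H; apply/existsP; by exists l2; rewrite l2M H.
  move=> l1 l2; rewrite !in_setU1 => /predU1P [->|l1M] /predU1P [->|l2M]; rewrite ?eqxx //.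
  + by move=> _; apply: H0.
  + by move=> _; rewrite disjoint_sym; apply: H0.
  + exact: Hd.
- move=> i /orP [/orP [] /eqP -> | /existsP [l /andP [lM il]]]; apply/existsP;
    [exists [set x;y] | exists [set x;y] | exists l]; rewrite !inE ?eqxx ?orbT ?lM ?il ?orbT //.
Qed.

Lemma max_maximal Q M (w : V -> nat) x y : is_schedule e Q M ->
  (forall M', is_schedule e Q M' -> sched_weight w M' <= sched_weight w M) ->
  (forall i, 0 < w i) -> e x y -> 0 < Q [set x; y] -> served M x || served M y.
Proof.
move=> SM opt wpos exy q; apply: contraT; rewrite negb_or => /andP [nx ny].
have [S C] := add_link SM exy q nx ny.
have C' : forall i, (i == x) || served M i -> served ([set x; y] |: M) i.
  by move=> i H; apply: C; case/orP: H => [->|->]; rewrite ?orbT.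
have := sw_add w nx C'.
have := opt _ S; have := wpos x; lia.
Qed.

Lemma exchange Q (Ms : {set {set V}}) n : forall M z, #|Ms :\: M| <= n ->
  is_schedule e Q M -> is_schedule e Q Ms -> served Ms z -> ~~ served M z ->
  exists M', is_schedule e Q M' /\
   ((forall i, (i == z) || served M i -> served M' i) \/
    exists2 x, served M x && ~~ served Ms x &
      (forall i, (i == z) || served M i -> i != x -> served M' i)).
Proof.
elim: n => [|n IH] M z hn SM SMs sz nz;
  case/existsP: (sz) => l /andP [lMs zl];
  (have lnM : l \notin M by apply: contra nz => lM; apply/existsP; exists l; rewrite lM).
  by move: hn; rewrite (cardsD1 l) inE lMs lnM.
have [SMsl SMsd] := SMs; have [ll ql] := SMsl l lMs.
have [y ezy ly] := link2 ll zl.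
case: (boolP (served M y)) => sy; last first.
  have qz : 0 < Q [set z; y] by rewrite -ly.
  have [S C] := add_link SM ezy qz nz sy.
  exists ([set z; y] |: M); split => //; left => i H; apply: C.
  by case/orP: H => [->|->]; rewrite ?orbT.
case/existsP: (sy) => l2 /andP [l2M yl2].
have [l2l ql2] := SM.1 l2 l2M.
have [x eyx l2e] := link2 l2l yl2.
have xz : x != z.
  by apply: contraNneq nz => <-; apply/existsP; exists l2; rewrite l2M l2e !inE eqxx orbT.
have yl : y \in l by rewrite ly !inE eqxx orbT.
have l2nMs : l2 \notin Ms.
  apply: contraNN nz => l2Ms; apply/existsP; exists l2; rewrite l2M.
  by rewrite -(sched_uniq SMs lMs l2Ms yl yl2).
have nl3 : forall l3 i, l3 \in M :\ l2 -> i \in l -> i \notin l3.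
  move=> l3 i; rewrite !inE => /andP [l3l2 l3M]; rewrite ly => /set2P [] ->.
    by apply: contra nz => zl3; apply/existsP; exists l3; rewrite l3M.
  by apply: contra l3l2 => yl3; rewrite (sched_uniq SM l3M l2M yl3 yl2).
set M1 := l |: (M :\ l2).
have SM1 : is_schedule e Q M1.
  split.
    move=> l'; rewrite in_setU1 => /predU1P [-> | ]; first by split.
    by rewrite !inE => /andP [_ /SM.1].
  have H0 : forall l3, l3 \in M :\ l2 -> [disjoint l & l3].
    by move=> l3 l3M; apply: disjP => i il; apply: nl3.
  move=> l1 l3; rewrite !in_setU1 => /predU1P [->|l1M] /predU1P [->|l3M]; rewrite ?eqxx //.
  + by move=> _; apply: H0.
  + by move=> _; rewrite disjoint_sym; apply: H0.
  + move: l1M l3M; rewrite !inE => /andP [_ l1M] /andP [_ l3M].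
    exact: SM.2.
have C1 : forall i, (i == z) || served M i -> i != x -> served M1 i.
  move=> i /orP [/eqP -> | /existsP [l3 /andP [l3M il3]]] ix.
    by apply/existsP; exists l; rewrite zl in_setU1 eqxx.
  apply/existsP; case: (eqVneq l3 l2) => [E|ne].
    exists l; rewrite in_setU1 eqxx /=; move: il3; rewrite E l2e => /set2P [] E2.
      by rewrite E2 yl.
    by rewrite E2 eqxx in ix.
  by exists l3; rewrite il3 in_setU1 !inE ne l3M orbT.
have C2 : forall i, served M1 i -> (i == z) || served M i.
  move=> i /existsP [l3 /andP [H il3]]; move: H; rewrite in_setU1 => /predU1P [E | ].
    by move: il3; rewrite E ly => /set2P [] ->; rewrite ?eqxx ?sy ?orbT.
  rewrite !inE => /andP [_ l3M]; by apply/orP; right; apply/existsP; exists l3; rewrite l3M il3.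
have nx1 : ~~ served M1 x.
  apply/existsP => -[l3 /andP [H xl3]]; move: H; rewrite in_setU1 => /predU1P [E | l3M].
    move: xl3; rewrite E ly => /set2P [] {}E; first by rewrite E eqxx in xz.
    by move: (e_irr y); rewrite -{2}E eyx.
  move: l3M; rewrite !inE => /andP [ne l3M].
  have xl2 : x \in l2 by rewrite l2e !inE eqxx orbT.
  by rewrite (sched_uniq SM l3M l2M xl3 xl2) eqxx in ne.
case: (boolP (served Ms x)) => sxMs; last first.
  exists M1; split => //; right; exists x => //.
  by rewrite sxMs andbT; apply/existsP; exists l2; rewrite l2M l2e !inE eqxx orbT.
have hn1 : #|Ms :\: M1| <= n.
  have sub : Ms :\: M1 \subset (Ms :\: M) :\ l.
    apply/subsetP => l'; rewrite !inE => /andP [nl' l'Ms].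
    move: nl'; rewrite negb_or negb_and negbK => /andP [-> H]; rewrite l'Ms andbT /=.
    case/orP: H => [/eqP E|->] //; by rewrite E l2M; move: l2nMs; rewrite -E l'Ms.
  move: hn; rewrite (cardsD1 l) inE lMs lnM /= add1n ltnS => hn.
  exact: leq_trans (subset_leq_card sub) hn.
have [M' [SM' [H|[x' /andP [sx' nsx'] H]]]] := IH M1 x hn1 SM1 SMs sxMs nx1.
  exists M'; split => //; left => i Hi; apply: H.
  by case: (eqVneq i x) => [->|ix]; rewrite ?eqxx // (C1 _ Hi ix) orbT.
have x'z : x' != z by apply: contraNneq nsx' => ->.
have sMx' : served M x' by move: (C2 _ sx'); rewrite (negbTE x'z).
exists M'; split => //; right; exists x'; first by rewrite sMx' nsx'.
move=> i Hi ix'; apply: H => //.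
by case: (eqVneq i x) => [->|ix]; rewrite ?eqxx // (C1 _ Hi ix) orbT.
Qed.

Lemma nq_nbr Q x : node_queue e Q x = \sum_(y | e x y) Q [set x; y].
Proof.
rewrite /node_queue.
have inj : {in [pred y | e x y] &, injective (fun y => [set x; y])}.
  move=> y1 y2; rewrite !inE => e1 e2 E.
  have : y1 \in [set x; y2] by rewrite -E !inE eqxx orbT.
  case/set2P => // E1; by move: (e_neq e1); rewrite E1 eqxx.
rewrite -(big_imset _ inj); apply: eq_bigl => l.
apply/andP/imsetP => [[ll xl] | [y ey ->]].
  by have [y exy ->] := link2 ll xl; exists y.
by split; [apply: link_set2 | rewrite !inE eqxx].
Qed.

Lemma decomp Q (c : V -> bool) (f : V -> V) n : forall W : {set V}, #|W| <= n ->
  (forall x, x \in W -> e x (f x) && (0 < Q [set x; f x])) -> {in W &, injective f} ->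
  (forall x y, x \in W -> y \in W -> e x y -> 0 < Q [set x; y] -> c x != c y) ->
  exists Ms, [/\ is_schedule e Q Ms, forall x, x \in W -> served Ms x &
     forall l, l \in Ms -> exists2 x, x \in W & l = [set x; f x]].
Proof.
elim: n => [|n IH] W hW fR finj col.
  move: hW; rewrite leqn0 cards_eq0 => /eqP ->.
  by exists set0; split => [|x|l]; rewrite ?inE //; split => l; rewrite inE.
case: (boolP [exists v in W, [forall x in W, f x != v]]).
  case/exists_inP => v vW /forall_inP nopre.
  set W' := W :\ v :\ f v.
  have sW' : W' \subset W by apply: subset_trans (subD1set _ _) (subD1set _ _).
  have hW' : #|W'| <= n.
    move: hW; rewrite (cardsD1 v) vW add1n ltnS => h.
    exact: leq_trans (subset_leq_card (subD1set _ _)) h.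
  have fR' : forall x, x \in W' -> e x (f x) && (0 < Q [set x; f x]).
    by move=> x xW; apply: fR; apply: (subsetP sW').
  have finj' : {in W' &, injective f}.
    by move=> x y xW yW; apply: finj; apply: (subsetP sW').
  have col' : forall x y, x \in W' -> y \in W' -> e x y -> 0 < Q [set x; y] -> c x != c y.
    by move=> x y xW yW; apply: col; apply: (subsetP sW').
  have [Ms' [S' C' F']] := IH W' hW' fR' finj' col'.
  have /andP [ev qv] := fR v vW.
  have nsv : ~~ served Ms' v.
    apply/existsP => -[l /andP [lM vl]]; have [x xW' E] := F' l lM.
    move: vl; rewrite E => /set2P [] E2.
      by move: xW'; rewrite /W' !inE -E2 eqxx andbF.
    by move: (nopre x (subsetP sW' x xW')); rewrite E2 eqxx.
  have nsfv : ~~ served Ms' (f v).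
    apply/existsP => -[l /andP [lM vl]]; have [x xW' E] := F' l lM.
    move: vl; rewrite E => /set2P [] E2.
      by move: xW'; rewrite /W' !inE -E2 eqxx.
    have xW := subsetP sW' x xW'.
    by move: xW'; rewrite /W' !inE (finj _ _ vW xW E2) eqxx andbF.
  have [S C] := add_link S' ev qv nsv nsfv.
  exists ([set v; f v] |: Ms'); split => //.
    move=> x xW; apply: C; case: (eqVneq x v) => [-> | xv]; rewrite ?eqxx //=.
    case: (eqVneq x (f v)) => [-> | xfv]; rewrite ?eqxx ?orbT //=.
    by apply: C'; rewrite /W' !inE xv xfv xW.
  move=> l; rewrite in_setU1 => /predU1P [-> | lM]; first by exists v.
  by have [x xW E] := F' l lM; exists x => //; apply: (subsetP sW').
move=> nex.
have pre : forall v, v \in W -> exists2 x, x \in W & f x = v.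
  move=> v vW; move: nex; rewrite negb_exists_in => /forall_inP /(_ v vW).
  by rewrite negb_forall_in => /exists_inP [x xW /negPn /eqP E]; exists x.
exists [set [set x; f x] | x in [set x in W | c x]]; split.
- split.
    move=> l /imsetP [x]; rewrite inE => /andP [xW _] ->.
    by have /andP [ex qx] := fR x xW; split => //; apply: link_set2.
  move=> l1 l2 /imsetP [x1]; rewrite inE => /andP [x1W cx1] ->.
  move=> /imsetP [x2]; rewrite inE => /andP [x2W cx2] -> ne.
  have x12 : x1 != x2 by apply: contraNneq ne => ->.
  have hc : forall a b, a \in W -> b \in W -> c a -> c b -> a != f b.
    move=> a b aW bW ca cb; apply/eqP => E.
    have /andP [eb qb] := fR b bW.
    have fbW : f b \in W by rewrite -E.
    by move: (col b (f b) bW fbW eb qb); rewrite -E ca cb.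
  apply: disjP => i /set2P [] -> ; rewrite !inE negb_or.
    by rewrite x12 (hc x1 x2).
  rewrite eq_sym (hc x2 x1) //=; apply: contra x12 => /eqP E.
  by rewrite (finj _ _ x1W x2W E).
- move=> v vW; case: (boolP (c v)) => cv.
    by apply/existsP; exists [set v; f v]; rewrite !inE eqxx andbT; apply/imsetP; exists v => //; rewrite inE vW.
  have [x xW E] := pre v vW.
  have /andP [ex qx] := fR x xW.
  have cx : c x by move: (col x v xW vW); rewrite -E => /(_ ex qx); rewrite E (negbTE cv); case: (c x).
  apply/existsP; exists [set x; f x]; rewrite E !inE eqxx orbT andbT.
  by apply/imsetP; exists x; rewrite ?inE ?xW ?cx ?E.
- by move=> l /imsetP [x]; rewrite inE => /andP [xW _] ->; exists x.
Qed.

Lemma cover Q M (w : V -> nat) (c : V -> bool) :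
  is_schedule e Q M ->
  (forall M', is_schedule e Q M' -> sched_weight w M' <= sched_weight w M) ->
  (forall i, 0 < w i <= 5) ->
  0 < maxq e Q ->
  (forall i, w i = 5 -> node_queue e Q i = maxq e Q) ->
  (forall x y, w x = 5 -> w y = 5 -> e x y -> 0 < Q [set x; y] -> c x != c y) ->
  forall i, w i = 5 -> served M i.
Proof.
move=> SM opt wb D0 crit col.
set W := [set i | w i == 5].
pose g := [rel x y | e x y && (0 < Q [set x; y])].
pose a x y := if e x y then Q [set x; y] else 0.
have hall_c : forall S : {set V}, S \subset W -> #|S| <= #|nbh g S|.
  move=> S sSW; rewrite -(leq_pmul2r D0).
  have E1 : \sum_(x in S) node_queue e Q x = #|S| * maxq e Q.
    rewrite -sum_nat_const; apply: eq_bigr => x xS; apply: crit.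
    by move: (subsetP sSW x xS); rewrite inE => /eqP.
  have E2 : forall x, x \in S -> node_queue e Q x = \sum_(y in nbh g S) a x y.
    move=> x xS; rewrite nq_nbr big_mkcond /= (bigID (fun y => y \in nbh g S)) /=.
    rewrite [X in _ + X]big1 ?addn0.
      by apply: eq_bigl => y.
    move=> y ny; rewrite /a; case: ifP => // exy.
    apply/eqP; rewrite -leqn0 leqNgt; apply: contra ny => q.
    by rewrite inE; apply/existsP; exists x; rewrite xS /= exy q.
  have E3 : forall y, \sum_(x in S) a x y <= maxq e Q.
    move=> y; apply: leq_trans (leq_bigmax y).
    rewrite nq_nbr big_mkcond [X in _ <= X]big_mkcond /=.
    apply: leq_sum => x _; rewrite /a e_sym [[set x; y]]setUC.
    by case: (x \in S); case: (e y x).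
  rewrite -E1 (eq_bigr _ E2) exchange_big /= -sum_nat_const.
  exact: leq_sum.
have [f [fR finj]] := hall (leqnn _) hall_c.
have fR' : forall x, x \in W -> e x (f x) && (0 < Q [set x; f x]) by move=> x /fR.
have col' : forall x y, x \in W -> y \in W -> e x y -> 0 < Q [set x; y] -> c x != c y.
  by move=> x y; rewrite !inE => /eqP xW /eqP yW; apply: col.
have [Ms [SMs CMs _]] := decomp (leqnn _) fR' finj col'.
move=> i wi; apply: contraT => ni.
have iW : i \in W by rewrite inE wi.
have [M' [SM' [H | [x /andP [sx nsx] H]]]] := exchange (leqnn _) SM SMs (CMs i iW) ni.
  have := sw_add w ni H; have := opt _ SM'; have := wb i; lia.
have xnW : w x != 5 by apply: contra nsx => xw; apply: CMs; rewrite inE.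
have := sw_swap w ni sx H; have := opt _ SM'; have := wb x; have := wb i; rewrite wi.
move: xnW; lia.
Qed.

Lemma nq_step Q Q' M : is_schedule e Q M -> (forall l, Q' l = Q l - (l \in M)) ->
  forall i, node_queue e Q' i = node_queue e Q i - served M i.
Proof.
move=> SM H i; rewrite /node_queue (eq_bigr _ (fun l _ => H l)) sumnB; last first.
  move=> l _; case: (boolP (l \in M)) => // lM; exact: (SM.1 l lM).2.
congr (_ - _); case: (boolP (served M i)) => si.
  case/existsP: (si) => l0 /andP [l0M il0].
  rewrite (bigD1 l0) /= ?l0M ?il0 ?(SM.1 l0 l0M).1 // big1 // => l /andP [/andP [_ il] ne].
  case: (boolP (l \in M)) => // lM.
  by rewrite (sched_uniq SM lM l0M il il0) eqxx in ne.
apply: big1 => l /andP [_ il]; case: (boolP (l \in M)) => // lM.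
by move: si; rewrite /served; case/existsP; exists l; rewrite lM il.
Qed.

Lemma served_pos Q M i : is_schedule e Q M -> served M i -> 0 < node_queue e Q i.
Proof.
move=> SM /existsP [l /andP [lM il]]; have [ll ql] := SM.1 l lM.
rewrite /node_queue (bigD1 l) /= ?ll ?il //.
exact: leq_trans ql (leq_addr _ _).
Qed.

Lemma le_maxq Q i : node_queue e Q i <= maxq e Q.
Proof. exact: leq_bigmax. Qed.

Lemma maxq_le Q m : (forall i, node_queue e Q i <= m) -> maxq e Q <= m.
Proof. by move=> H; apply/bigmax_leqP => i _. Qed.

Lemma weight_b Q (u : bool) i : 0 < weight e Q u i <= 5.
Proof. by rewrite /weight; case: (critical e Q i); case: (heavy e Q i); case: u. Qed.

Lemma weight5 Q (u : bool) i : weight e Q u i = 5 -> critical e Q i && ~~ u.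
Proof. by rewrite /weight; case: (critical e Q i); case: (heavy e Q i); case: u. Qed.

Lemma weight5' Q (u : bool) i : critical e Q i -> ~~ u -> weight e Q u i = 5.
Proof. by rewrite /weight => ->; case: u. Qed.

Lemma main (Q : nat -> {set V} -> nat) (Ms : nat -> {set {set V}}) :
  (forall k, lcnsb_choice e Q Ms k) -> no_arrival_dynamics Q Ms ->
  forall k', 2 <= maxq e (Q (3 * k')) ->
    maxq e (Q (3 * k' + 3)) <= maxq e (Q (3 * k')) - 2.
Proof.
move=> ch dyn k' D2.
set D := maxq e (Q (3 * k')).
have Sk : forall k, is_schedule e (Q k) (Ms k) by move=> k; exact: (ch k).1.
have opt : forall k M, is_schedule e (Q k) M ->
    sched_weight (fun i => weight e (Q k) (Uv Ms k i) i) M <=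
    sched_weight (fun i => weight e (Q k) (Uv Ms k i) i) (Ms k).
  by move=> k; exact: (ch k).2.
have wb : forall k i, 0 < weight e (Q k) (Uv Ms k i) i <= 5 by move=> k i; exact: weight_b.
have wpos : forall k i, 0 < weight e (Q k) (Uv Ms k i) i.
  by move=> k i; case/andP: (wb k i).
have step : forall k i, node_queue e (Q k.+1) i = node_queue e (Q k) i - Rv Ms k i.
  by move=> k; apply: nq_step (Sk k) _ => l; exact: dyn.
have mono : forall k l, Q k.+1 l <= Q k l by move=> k l; rewrite dyn leq_subr.
have maximal : forall k x y, e x y -> 0 < Q k [set x; y] -> Rv Ms k x || Rv Ms k y.
  by move=> k x y exy q; apply: (max_maximal (Sk k) (opt k) (wpos k) exy q).
have e1 : 3 * k' + 1 = (3 * k').+1 by rewrite addn1.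
have e2 : 3 * k' + 2 = (3 * k' + 1).+1 by rewrite addnS.
have e3 : 3 * k' + 3 = (3 * k' + 2).+1 by rewrite addnS.
have h1 : forall i, node_queue e (Q (3 * k' + 1)) i = node_queue e (Q (3 * k')) i - Rv Ms (3 * k') i.
  by move=> i; rewrite e1 step.
have h2 : forall i, node_queue e (Q (3 * k' + 2)) i = node_queue e (Q (3 * k' + 1)) i - Rv Ms (3 * k' + 1) i.
  by move=> i; rewrite e2 step.
have h3 : forall i, node_queue e (Q (3 * k' + 3)) i = node_queue e (Q (3 * k' + 2)) i - Rv Ms (3 * k' + 2) i.
  by move=> i; rewrite e3 step.
have m1 : forall l, Q (3 * k' + 1) l <= Q (3 * k') l by move=> l; rewrite e1.
have m2 : forall l, Q (3 * k' + 2) l <= Q (3 * k' + 1) l by move=> l; rewrite e2.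
have q0D : forall i, node_queue e (Q (3 * k')) i <= D by move=> i; exact: le_maxq.
have cA : forall i, node_queue e (Q (3 * k' + 2)) i <= D - 1.
  move=> i; rewrite h2 h1.
  case R0i: (Rv Ms (3 * k') i); first exact: ar3.
  case R1i: (Rv Ms (3 * k' + 1) i); first exact: ar4.
  rewrite !subn0; apply: ar1 => //; apply/negP => /eqP q0i.
  have le1 : maxq e (Q (3 * k' + 1)) <= D.
    apply: maxq_le => j; rewrite h1; exact: leq_trans (leq_subr _ _) (q0D j).
  have q1i : node_queue e (Q (3 * k' + 1)) i = D by rewrite h1 R0i subn0.
  have M1 : maxq e (Q (3 * k' + 1)) = D.
    by apply/eqP; rewrite eqn_leq le1 -{1}q1i le_maxq.
  have crit1 : critical e (Q (3 * k' + 1)) i by rewrite /critical q1i M1.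
  have w5 : weight e (Q (3 * k' + 1)) (Uv Ms (3 * k' + 1) i) i = 5.
    by apply: weight5' => //; rewrite U1 R0i.
  have D0 : 0 < maxq e (Q (3 * k' + 1)) by rewrite M1; apply: leq_trans D2.
  have critH : forall j, weight e (Q (3 * k' + 1)) (Uv Ms (3 * k' + 1) j) j = 5 ->
      node_queue e (Q (3 * k' + 1)) j = maxq e (Q (3 * k' + 1)).
    by move=> j /weight5 /andP [/eqP -> _].
  have colH : forall x y, weight e (Q (3 * k' + 1)) (Uv Ms (3 * k' + 1) x) x = 5 ->
      weight e (Q (3 * k' + 1)) (Uv Ms (3 * k' + 1) y) y = 5 ->
      e x y -> 0 < Q (3 * k' + 1) [set x; y] -> (fun _ : V => true) x != (fun _ : V => true) y.
    move=> x y /weight5 /andP [_] ux /weight5 /andP [_] uy exy q.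
    rewrite !U1 in ux uy.
    have q0 : 0 < Q (3 * k') [set x; y] by apply: leq_trans q (m1 _).
    by move: (maximal _ _ _ exy q0); rewrite (negbTE ux) (negbTE uy).
  have := cover (Sk _) (opt _) (wb _) D0 critH colH w5.
  by rewrite /Rv in R1i; rewrite R1i.
apply: maxq_le => i; rewrite h3.
case: (leqP (node_queue e (Q (3 * k' + 2)) i) (D - 2)) => hi.
  exact: leq_trans (leq_subr _ _) hi.
have q2i := ar2 (cA i) hi.
have M2 : maxq e (Q (3 * k' + 2)) = D - 1.
  by apply/eqP; rewrite eqn_leq (maxq_le cA) -{1}q2i le_maxq.
have crit2 : critical e (Q (3 * k' + 2)) i by rewrite /critical q2i M2.
have nU : ~~ Uv Ms (3 * k' + 2) i.
  rewrite U2; apply/negP => /andP [R1i R0i].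
  move: hi; rewrite h2 h1 R1i R0i /=; exact: ar5.
have w5 := weight5' crit2 nU.
have D0 : 0 < maxq e (Q (3 * k' + 2)) by rewrite M2; exact: ar7 D2 (erefl _).
have critH : forall j, weight e (Q (3 * k' + 2)) (Uv Ms (3 * k' + 2) j) j = 5 ->
    node_queue e (Q (3 * k' + 2)) j = maxq e (Q (3 * k' + 2)).
  by move=> j /weight5 /andP [/eqP -> _].
have colH : forall x y, weight e (Q (3 * k' + 2)) (Uv Ms (3 * k' + 2) x) x = 5 ->
    weight e (Q (3 * k' + 2)) (Uv Ms (3 * k' + 2) y) y = 5 ->
    e x y -> 0 < Q (3 * k' + 2) [set x; y] -> Rv Ms (3 * k' + 1) x != Rv Ms (3 * k' + 1) y.
  move=> x y /weight5 /andP [_] ux /weight5 /andP [_] uy exy q.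
  rewrite !U2 in ux uy.
  have q1 : 0 < Q (3 * k' + 1) [set x; y] by apply: leq_trans q (m2 _).
  have q0 : 0 < Q (3 * k') [set x; y] by apply: leq_trans q1 (m1 _).
  move: (maximal _ _ _ exy q0) (maximal _ _ _ exy q1) ux uy.
  by case: (Rv Ms (3 * k' + 1) x); case: (Rv Ms (3 * k' + 1) y);
     case: (Rv Ms (3 * k') x); case: (Rv Ms (3 * k') y).
have si : Rv Ms (3 * k' + 2) i := cover (Sk _) (opt _) (wb _) D0 critH colH w5.
by rewrite si; apply: ar6.
Qed.

End Gen.

Theorem proposition2 (V : finType) (e : rel V)
    (e_sym : symmetric e) (e_irr : irreflexive e)
    (Q : nat -> {set V} -> nat) (Ms : nat -> {set {set V}}) :
  (forall k, lcnsb_choice e Q Ms k) ->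
  no_arrival_dynamics Q Ms ->
  forall k' : nat,
    2 <= maxq e (Q (3 * k')) ->
    maxq e (Q (3 * k' + 3)) <= maxq e (Q (3 * k')) - 2.
Proof. exact: main. Qed.
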